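(* Let $L$ be an ideal lattice and $L'\subseteq L$ a subset such that (i) $\inf A\in L'$ for every $A\subseteq L'$, and (ii) $\sup A\in L'$ for every directed $A\subseteq L'$. Define $\pi\colon L\to L'$ by $\pi(a)=\bigwedge\{a'\in L'\mid a\leq a'\}$ and on $L'$ the product $a\cdot b=\pi(ab)$. Suppose (iii) $\pi(a\pi(b))=\pi(ab)=\pi(\pi(a)b)$ for all $a,b\in L$. Then $L'$, with the partial order induced from $L$ and the product $\cdot$, is an ideal lattice.
   Context: An ideal lattice is a poset $(L,\leq)$ with an associative multiplication such that: (L1) $L$ is a complete lattice; (L2) every element is a supremum of compact elements ($a$ is compact if $a\leq\sup A$ implies $a\leq\sup A'$ for some finite $A'\subseteq A$); (L3) multiplication distributes over binary joins on both sides; (L4) $1=\sup L$ is compact and is a two-sided identity; (L5) products of compact elements are compact. *)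

(* Defs.v *)
(* Ideal lattices are defined "on a carrier predicate"
   C : T -> Prop, so that both L (C = everything) and a subset L' of L with the
   induced order can be treated uniformly.  All suprema / infima below are
   computed INSIDE C (i.e. with respect to the induced order on C). *)
From Stdlib Require Import List.

Set Implicit Arguments.

Section IdealLattice.
Variable T : Type.
Variable C : T -> Prop.
Variable le : T -> T -> Prop.

Definition subset (A B : T -> Prop) : Prop := forall x, A x -> B x.

Definition upper_in (A : T -> Prop) (x : T) : Prop :=
  C x /\ forall y, A y -> le y x.

Definition lower_in (A : T -> Prop) (x : T) : Prop :=
  C x /\ forall y, A y -> le x y.

Definition is_sup_in (A : T -> Prop) (x : T) : Prop :=
  upper_in A x /\ forall z, upper_in A z -> le x z.

Definition is_inf_in (A : T -> Prop) (x : T) : Prop :=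
  lower_in A x /\ forall z, lower_in A z -> le z x.

Definition partial_order_on : Prop :=
  (forall x, C x -> le x x) /\
  (forall x y, C x -> C y -> le x y -> le y x -> x = y) /\
  (forall x y z, C x -> C y -> C z -> le x y -> le y z -> le x z).

Definition complete_on : Prop :=
  partial_order_on /\ forall A, subset A C -> exists s, is_sup_in A s.

Definition list_set (l : list T) : T -> Prop := fun x => In x l.

Definition compact_in (a : T) : Prop :=
  C a /\
  forall A s, subset A C -> is_sup_in A s -> le a s ->
    exists (l : list T) (s' : T),
      subset (list_set l) A /\ is_sup_in (list_set l) s' /\ le a s'.

Definition pair_set (x y : T) : T -> Prop := fun z => z = x \/ z = y.

Definition ideal_lattice_on (mul : T -> T -> T) : Prop :=
  (forall a b, C a -> C b -> C (mul a b)) /\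
  (forall a b c, C a -> C b -> C c -> mul (mul a b) c = mul a (mul b c)) /\
  complete_on /\
  (forall a, C a -> exists A, subset A compact_in /\ is_sup_in A a) /\
  (forall a b c s, C a -> C b -> C c -> is_sup_in (pair_set b c) s ->
      is_sup_in (pair_set (mul a b) (mul a c)) (mul a s) /\
      is_sup_in (pair_set (mul b a) (mul c a)) (mul s a)) /\
  (forall t, is_sup_in C t ->
      compact_in t /\ forall a, C a -> mul t a = a /\ mul a t = a) /\
  (forall a b, compact_in a -> compact_in b -> compact_in (mul a b)).

End IdealLattice.

Definition everything (T : Type) : T -> Prop := fun _ => True.
Arguments everything T _ : clear implicits.

Definition directed (T : Type) (le : T -> T -> Prop) (A : T -> Prop) : Prop :=
  (exists x, A x) /\
  forall x y, A x -> A y -> exists z, A z /\ le x z /\ le y z.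

(* Main.v *)
Require Import Defs.
From Stdlib Require Import List.

Theorem mainTheorem12 (T : Type) (le : T -> T -> Prop) (mul : T -> T -> T)
  (L' : T -> Prop) (pi : T -> T) :
  ideal_lattice_on (everything T) le mul ->
  (* (i) L' is closed under arbitrary infima (computed in L) *)
  (forall A x, subset A L' -> is_inf_in (everything T) le A x -> L' x) ->
  (* (ii) L' is closed under directed suprema (computed in L) *)
  (forall A x, subset A L' -> directed le A ->
     is_sup_in (everything T) le A x -> L' x) ->
  (* pi a = inf { a' in L' | a <= a' } (in L) *)
  (forall a, is_inf_in (everything T) le (fun a' => L' a' /\ le a a') (pi a)) ->
  (* (iii) *)
  (forall a b, pi (mul a (pi b)) = pi (mul a b) /\ pi (mul a b) = pi (mul (pi a) b)) ->
  ideal_lattice_on L' le (fun a b => pi (mul a b)).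
Proof.
  intros HL Hi Hii Hpi Hiii.
  destruct HL as [_ [Hass [[[Hrefl [Hanti Htrans]] Hsup] [HL2 [HL3 [HL4 HL5]]]]]].
  assert (E : forall x, everything T x) by (intros; exact I).
  assert (refl : forall x, le x x) by (intros; apply Hrefl, E).
  assert (anti : forall x y, le x y -> le y x -> x = y) by (intros; apply Hanti; auto).
  assert (trans : forall x y z, le x y -> le y z -> le x z)
    by (intros x y z; apply Htrans; auto).
  assert (sup : forall A, exists s, is_sup_in (everything T) le A s)
    by (intros A; apply Hsup; intros x _; exact I).
  assert (piL : forall x, L' (pi x)).
  { intros x. apply (Hi _ _ (fun y (H : L' y /\ le x y) => proj1 H) (Hpi x)). }
  assert (incr : forall x, le x (pi x)).
  { intros x. destruct (Hpi x) as [_ H]. apply H. split; [exact I|].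
    intros y [_ Hy]; exact Hy. }
  assert (pimin : forall x z, L' z -> le x z -> le (pi x) z).
  { intros x z Hz Hxz. destruct (Hpi x) as [[_ H] _]. apply H; auto. }
  assert (pifix : forall x, L' x -> pi x = x).
  { intros x Hx. apply anti; auto. }
  assert (mono : forall x y, le x y -> le (pi x) (pi y)).
  { intros x y H. apply pimin; auto. eapply trans; eauto. }
  assert (pisup : forall (A B : T -> Prop) u, is_sup_in (everything T) le A u ->
     (forall y, B y -> exists x, A x /\ y = pi x) ->
     (forall x, A x -> exists y, B y /\ le x y) ->
     is_sup_in L' le B (pi u)).
  { intros A B u [[_ Hu1] Hu2] HB1 HB2. split.
    - split; [apply piL|]. intros y Hy. destruct (HB1 y Hy) as [x [Hx ->]].
      apply mono; auto.
    - intros z [Hz Hz2]. apply pimin; auto. apply Hu2. split; [exact I|].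
      intros x Hx. destruct (HB2 x Hx) as [y [Hy Hxy]]. eapply trans; eauto. }
  assert (supL' : forall A, subset A L' -> exists s, is_sup_in L' le A s).
  { intros A HA. destruct (sup A) as [u Hu]. exists (pi u).
    apply (pisup A A u Hu).
    - intros y Hy. exists y. split; [exact Hy|]. symmetry; apply pifix; auto.
    - intros x Hx. exists x; split; auto. }
  assert (supuniq : forall C A s1 s2, is_sup_in C le A s1 -> is_sup_in C le A s2 -> s1 = s2).
  { intros C A s1 s2 [H1 H1'] [H2 H2']. apply anti; auto. }
  assert (cjoin : forall c1 c2 u, compact_in (everything T) le c1 ->
     compact_in (everything T) le c2 -> is_sup_in (everything T) le (pair_set c1 c2) u ->
     compact_in (everything T) le u).
  { intros c1 c2 u [_ K1] [_ K2] [[_ Hu1] Hu2]. split; [exact I|].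
    intros A s HA Hs Hus.
    destruct (K1 A s HA Hs) as [l1 [s1 [Hl1 [Hs1 Hc1]]]].
    { eapply trans; [apply Hu1; left; reflexivity| exact Hus]. }
    destruct (K2 A s HA Hs) as [l2 [s2 [Hl2 [Hs2 Hc2]]]].
    { eapply trans; [apply Hu1; right; reflexivity| exact Hus]. }
    destruct (sup (list_set (l1 ++ l2))) as [s3 Hs3].
    exists (l1 ++ l2), s3. split; [|split; auto].
    - intros x Hx. unfold list_set in Hx. apply in_app_or in Hx as [Hx|Hx]; auto.
    - apply Hu2. split; [exact I|]. intros y [->| ->].
      + eapply trans; [exact Hc1|]. apply (proj2 Hs1). split; [exact I|].
        intros z Hz. apply (proj2 (proj1 Hs3)). apply in_or_app; auto.
      + eapply trans; [exact Hc2|]. apply (proj2 Hs2). split; [exact I|].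
        intros z Hz. apply (proj2 (proj1 Hs3)). apply in_or_app; auto. }
  destruct (sup (fun _ => False)) as [bot Hbot].
  assert (botle : forall x, le bot x).
  { intros x. apply (proj2 Hbot). split; [exact I|]. intros y []. }
  assert (cbot : compact_in (everything T) le bot).
  { split; [exact I|]. intros A s _ _ _. exists nil, bot. split; [intros x []|].
    split; [|auto]. split; [split; [exact I| intros y []]|]. intros; auto. }
  assert (picomp : forall c, compact_in (everything T) le c -> compact_in L' le (pi c)).
  { intros c [_ Kc]. split; [apply piL|]. intros A s HA Hs Hcs.
    set (D := fun d => exists l, subset (list_set l) A /\ is_sup_in L' le (list_set l) d).
    assert (HDL : subset D L').
    { intros d [l [_ [[H _] _]]]. exact H. }
    assert (Hdir : directed le D).
    { split.
      - destruct (supL' (list_set nil)) as [d Hd]. intros x []. exists d, nil.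
        split; auto. intros x [].
      - intros x y [l1 [Hl1 Hx]] [l2 [Hl2 Hy]].
        destruct (supL' (list_set (l1 ++ l2))) as [d Hd].
        { intros z Hz. apply in_app_or in Hz as [Hz|Hz]; [apply HA, Hl1|apply HA, Hl2]; auto. }
        exists d. split; [|split].
        + exists (l1 ++ l2). split; auto. intros z Hz.
          apply in_app_or in Hz as [Hz|Hz]; auto.
        + apply (proj2 Hx). split; [exact (proj1 (proj1 Hd))|]. intros z Hz.
          apply (proj2 (proj1 Hd)). apply in_or_app; auto.
        + apply (proj2 Hy). split; [exact (proj1 (proj1 Hd))|]. intros z Hz.
          apply (proj2 (proj1 Hd)). apply in_or_app; auto. }
    destruct (sup D) as [v Hv].
    assert (HvL : L' v) by (apply (Hii D v HDL Hdir Hv)).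
    assert (Hsv : le s v).
    { apply (proj2 Hs). split; auto. intros y Hy.
      destruct (supL' (list_set (y :: nil))) as [d Hd].
      { intros z [<-|[]]. apply HA; auto. }
      eapply trans.
      - apply (proj2 (proj1 Hd)). left; reflexivity.
      - apply (proj2 (proj1 Hv)). exists (y :: nil). split; auto.
        intros z [<-|[]]; auto. }
    destruct (Kc D v (fun x _ => I) Hv) as [l [s' [Hl [Hs' Hcs']]]].
    { eapply trans; [apply incr|]. eapply trans; eauto. }
    assert (Hcomb : forall l, subset (list_set l) D -> exists l', subset (list_set l') A /\
       forall d, In d l -> forall y, upper_in L' le (list_set l') y -> le d y).
    { induction l0 as [|d l0 IH]; intros Hsub.
      - exists nil. split; [intros x []|]. intros d [].
      - destruct IH as [l' [Hl' Hl'2]]. { intros x Hx. apply Hsub. right; auto. }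
        destruct (Hsub d (or_introl eq_refl)) as [ld [Hld Hd]].
        exists (ld ++ l'). split.
        + intros x Hx. apply in_app_or in Hx as [Hx|Hx]; auto.
        + intros d' [<-|Hd'] y [Hy1 Hy2].
          * apply (proj2 Hd). split; auto. intros z Hz. apply Hy2. apply in_or_app; auto.
          * apply Hl'2; auto. split; auto. intros z Hz. apply Hy2. apply in_or_app; auto. }
    destruct (Hcomb l Hl) as [l' [Hl' Hl'2]].
    destruct (supL' (list_set l')) as [s'' Hs''].
    { intros x Hx; auto. }
    exists l', s''. split; auto. split; auto.
    apply pimin; [exact (proj1 (proj1 Hs''))|].
    eapply trans; [exact Hcs'|]. apply (proj2 Hs'). split; [exact I|].
    intros d Hd. apply Hl'2; auto. exact (proj1 Hs''). }
  destruct (sup (everything T)) as [one Hone].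
  assert (topge : forall x, le x one) by (intros; apply (proj2 (proj1 Hone)); exact I).
  assert (one_fix : pi one = one) by (apply anti; auto).
  assert (HoneL' : is_sup_in L' le L' one).
  { rewrite <- one_fix. apply (pisup (everything T) L' one Hone).
    - intros y Hy. exists y. split; [exact I|]. symmetry; auto.
    - intros x _. exists (pi x). split; auto. }
  destruct (HL4 one Hone) as [Hcone Hid].
  split; [intros; apply piL|].
  split.
  { intros a b c Ha Hb Hc. destruct (Hiii (mul a b) c) as [_ H1].
    destruct (Hiii a (mul b c)) as [H2 _]. rewrite <- H1, H2.
    rewrite Hass; auto. }
  split.
  { split; [|exact supL'].
    split; [intros; apply refl|]. split; [intros; apply anti; auto|].
    intros x y z _ _ _; apply trans. }
  split.
  { intros a Ha. destruct (HL2 a I) as [A [HAc HAs]].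
    exists (fun y => exists x, A x /\ y = pi x). split.
    - intros y [x [Hx ->]]. apply picomp, HAc, Hx.
    - rewrite <- (pifix a Ha). apply (pisup A); auto.
      intros x Hx. exists (pi x). split; eauto. }
  split.
  { intros a b c s Ha Hb Hc Hs. destruct (sup (pair_set b c)) as [u Hu].
    assert (Hsu : s = pi u).
    { apply (supuniq L' (pair_set b c)); auto. apply (pisup (pair_set b c)); auto.
      - intros y Hy. exists y. split; auto. destruct Hy as [->| ->]; symmetry; auto.
      - intros x Hx. exists x; split; auto. }
    subst s. destruct (HL3 a b c u I I I Hu) as [H1 H2].
    split.
    - destruct (Hiii a u) as [-> _]. apply (pisup _ _ _ H1).
      + intros y [->| ->]; eexists; split; [left; reflexivity|reflexivity| right; reflexivity|reflexivity].
      + intros x [->| ->]; eexists; split; [left; reflexivity|apply incr| right; reflexivity|apply incr].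
    - destruct (Hiii u a) as [_ <-]. apply (pisup _ _ _ H2).
      + intros y [->| ->]; eexists; split; [left; reflexivity|reflexivity| right; reflexivity|reflexivity].
      + intros x [->| ->]; eexists; split; [left; reflexivity|apply incr| right; reflexivity|apply incr]. }
  split.
  { intros t Ht. assert (t = one) as -> by (apply (supuniq L' L'); auto).
    split.
    - rewrite <- one_fix. apply picomp; auto.
    - intros a Ha. destruct (Hid a I) as [H1 H2]. rewrite H1, H2. split; auto. }
  assert (cchar : forall a, compact_in L' le a ->
            exists c, compact_in (everything T) le c /\ a = pi c).
  { intros a [Ha Ka]. destruct (HL2 a I) as [A [HAc HAs]].
    set (A' := fun y => exists x, A x /\ y = pi x).
    assert (HA's : is_sup_in L' le A' a).
    { rewrite <- (pifix a Ha). apply (pisup A); auto.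
      - intros x Hx. exists (pi x). split; eauto. exists x; auto. }
    destruct (Ka A' a) as [l [s' [Hl [Hs' Has']]]].
    { intros y [x [_ ->]]; auto. }
    { exact HA's. }
    { apply refl. }
    assert (Hc : forall l, subset (list_set l) A' ->
       exists c, compact_in (everything T) le c /\ le c a /\
         forall y, In y l -> le y (pi c)).
    { induction l0 as [|y l0 IH]; intros Hsub.
      - exists bot. split; auto. split; auto. intros y [].
      - destruct IH as [c [Hc1 [Hc2 Hc3]]]. { intros x Hx; apply Hsub; right; auto. }
        destruct (Hsub y (or_introl eq_refl)) as [x [Hx ->]].
        destruct (sup (pair_set c x)) as [u Hu].
        exists u. split; [apply (cjoin c x u Hc1 (HAc x Hx) Hu)|]. split.
        + apply (proj2 Hu). split; [exact I|]. intros z [->| ->]; auto.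
          apply (proj2 (proj1 HAs)); auto.
        + intros z [<-|Hz].
          * apply mono. apply (proj2 (proj1 Hu)). right; reflexivity.
          * eapply trans; [apply Hc3; auto|]. apply mono.
            apply (proj2 (proj1 Hu)). left; reflexivity. }
    destruct (Hc l Hl) as [c [Hc1 [Hc2 Hc3]]].
    exists c. split; auto. apply anti.
    - eapply trans; [exact Has'|]. apply (proj2 Hs'). split; auto.
    - apply pimin; auto. }
  intros a b Ha Hb. destruct (cchar a Ha) as [c [Hc ->]].
  destruct (cchar b Hb) as [d [Hd ->]].
  destruct (Hiii (pi c) d) as [-> _]. destruct (Hiii c d) as [_ <-].
  apply picomp, HL5; auto.
Qed.
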